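(* Let $\gamma\in\mathbb N\setminus\{1\}$, $b_1<b_2<\dots<b_\gamma$ real numbers, and $a\in C(\mathbb R,\mathbb R)$ with $a(x)=x^\gamma$ for all $x\in\mathbb R$. Then (i) there exist unique $c_0,c_1,\dots,c_\gamma\in\mathbb R$ such that for all $k\in\{0,1,\dots,\gamma\}$, $\mathbb 1_{\{\gamma\}}(k)c_0+\sum_{i=1}^\gamma c_i(b_i)^k=\mathbb 1_{\{\gamma-1\}}(k)\gamma^{-1}$; (ii) with these constants, $\Psi=\mathbf A_{1,c_0}\bullet\bigl(\bigoplus_{i=1}^\gamma(c_i\circledast(\mathfrak i_1\bullet\mathbf A_{1,b_i}))\bigr)\in\mathbf N$ is well defined; (iii) $\mathcal D(\Psi)=(1,\gamma,1)$; (iv) $\mathcal R_a(\Psi)\in C(\mathbb R,\mathbb R)$; and (v) $(\mathcal R_a(\Psi))(x)=x$ for all $x\in\mathbb R$.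
   Context: Artificial neural networks (ANNs). Let $\mathbb N=\{1,2,\dots\}$ and $\mathbf N=\bigcup_{L\in\mathbb N}\bigcup_{l_0,\dots,l_L\in\mathbb N}\prod_{k=1}^L(\mathbb R^{l_k\times l_{k-1}}\times\mathbb R^{l_k})$. For $\Phi=((W_1,B_1),\dots,(W_L,B_L))$ in the $(l_0,\dots,l_L)$ component, $\mathcal L(\Phi)=L$, $\mathcal I(\Phi)=l_0$, $\mathcal O(\Phi)=l_L$, $\mathcal D(\Phi)=(l_0,\dots,l_L)$. For $a\in C(\mathbb R,\mathbb R)$ the realization is $(\mathcal R_a(\Phi))(x_0)=W_Lx_{L-1}+B_L$ with $x_k=\mathfrak M_{a,l_k}(W_kx_{k-1}+B_k)$, $k=1,\dots,L-1$, $\mathfrak M_{a,m}$ applying $a$ componentwise. $\operatorname I_n$ is the identity matrix; $\mathbf A_{W,B}=((W,B))$ (for reals $w,b$, $\mathbf A_{w,b}$ has $1\times1$ weight $w$ and bias $b$). Composition: for $\Phi_1=((W_1,B_1),\dots,(W_L,B_L))$, $\Phi_2=((\mathscr W_1,\mathscr B_1),\dots,(\mathscr W_{\mathfrak L},\mathscr B_{\mathfrak L}))$ with $\mathcal I(\Phi_1)=\mathcal O(\Phi_2)$, $\Phi_1\bullet\Phi_2=((\mathscr W_1,\mathscr B_1),\dots,(\mathscr W_{\mathfrak L-1},\mathscr B_{\mathfrak L-1}),(W_1\mathscr W_{\mathfrak L},W_1\mathscr B_{\mathfrak L}+B_1),(W_2,B_2),\dots,(W_L,B_L))$. $\lambda\circledast\Phi=\mathbf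 A_{\lambda\operatorname I_{\mathcal O(\Phi)},0}\bullet\Phi$. $\mathbf P_n(\Phi_1,\dots,\Phi_n)$ (equal lengths) has $k$-th layer $(\operatorname{diag}(W_{1,k},\dots,W_{n,k}),(B_{1,k},\dots,B_{n,k}))$. $\mathfrak S_{m,n}=\mathbf A_{(\operatorname I_m\cdots\operatorname I_m),0}$, $\mathfrak T_{m,n}=\mathbf A_{(\operatorname I_m\cdots\operatorname I_m)^\top,0}$ ($n$ blocks). For $\Phi_u,\dots,\Phi_v$ with equal $\mathcal L,\mathcal I,\mathcal O$: $\bigoplus_{k=u}^v\Phi_k=\mathfrak S_{\mathcal O(\Phi_u),v-u+1}\bullet([\mathbf P_{v-u+1}(\Phi_u,\dots,\Phi_v)]\bullet\mathfrak T_{\mathcal I(\Phi_u),v-u+1})$. $\mathfrak i_n=((\operatorname I_n,0),(\operatorname I_n,0))\in(\mathbb R^{n\times n}\times\mathbb R^n)^2$. *)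

(* Defs.v *)
From HB Require Import structures.
From mathcomp Require Import all_boot all_order all_algebra.
From mathcomp Require Import all_classical all_reals all_analysis.

Set Implicit Arguments.
Unset Strict Implicit.
Unset Printing Implicit Defensive.

Import Order.TTheory GRing.Theory Num.Theory.
Local Open Scope ring_scope.

Section ANN.
Variable R : realType.

Record layer := Layer { lin : nat; lout : nat;
                        lW : 'M[R]_(lout, lin); lB : 'cV[R]_lout }.

(* Raw list of layers; [is_ann] is membership in the set \mathbf N
   (nonempty, consecutive dimensions chain). *)
Definition ann := seq layer.

Definition is_ann (Phi : ann) : bool :=
  (if Phi is [::] then false else true) && sorted (fun l1 l2 => lout l1 == lin l2) Phi.

Definition dims (Phi : ann) : seq nat :=
  if Phi is l :: _ then lin l :: map lout Phi else [::].
Definition lenN (Phi : ann) : nat := size Phi.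
Definition inD (Phi : ann) : nat := if Phi is l :: _ then lin l else 0%N.
Definition outD (Phi : ann) : nat := last 0%N (map lout Phi).

(* entry of a matrix addressed by natural numbers (0 outside the range) *)
Definition ent m n (A : 'M[R]_(m, n)) (i j : nat) : R :=
  match (insub i : option 'I_m), (insub j : option 'I_n) with
  | Some i', Some j' => A i' j'
  | _, _ => 0
  end.

(* merge l1 l2 = (W1 * W2, W1 * B2 + B1)  (l1 applied after l2) *)
Definition merge (l1 l2 : layer) : layer :=
  @Layer (lin l2) (lout l1)
    (\matrix_(i < lout l1, j < lin l2)
        \sum_(t < lin l1) lW l1 i t * ent (lW l2) t j)
    (\col_(i < lout l1)
        (\sum_(t < lin l1) lW l1 i t * ent (lB l2) t 0 + lB l1 i 0)).

Definition comp_raw (Phi1 Phi2 : ann) : ann :=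
  match Phi1 with
  | [::] => Phi2
  | l1 :: r1 =>
    match rev Phi2 with
    | [::] => Phi1
    | lL :: rr => rev rr ++ merge l1 lL :: r1
    end
  end.

(* Partial operations are modelled as option-valued: [None] means the
   construction is not well defined (some precondition fails). *)
Definition ncomp (o1 o2 : option ann) : option ann :=
  if o1 is Some Phi1 then
    if o2 is Some Phi2 then
      if [&& is_ann Phi1, is_ann Phi2 & inD Phi1 == outD Phi2]
      then Some (comp_raw Phi1 Phi2) else None
    else None
  else None.

Definition affA m n (W : 'M[R]_(m, n)) (B : 'cV[R]_m) : option ann :=
  Some [:: Layer W B].

Definition affA1 (w b : R) : option ann :=
  affA (w%:M : 'M[R]_1) (b%:M : 'cV[R]_1).

Definition smul (lam : R) (o : option ann) : option ann :=
  if o is Some Phi then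
    ncomp (affA (lam%:M : 'M[R]_(outD Phi)) 0) o
  else None.

Definition idnet (n : nat) : option ann :=
  Some [:: Layer (1%:M : 'M[R]_n) 0; Layer (1%:M : 'M[R]_n) 0].

Definition par_layer (l1 l2 : layer) : layer :=
  @Layer (lin l1 + lin l2) (lout l1 + lout l2)
    (block_mx (lW l1) 0 0 (lW l2)) (col_mx (lB l1) (lB l2)).

Fixpoint par_raw (Phis : seq ann) : ann :=
  match Phis with
  | [::] => [::]
  | Phi :: rest =>
    if rest is [::] then Phi
    else [seq par_layer p.1 p.2 | p <- zip Phi (par_raw rest)]
  end.

Definition par (Phis : seq ann) : option ann :=
  if [&& (if Phis is [::] then false else true), all is_ann Phis &
         all (fun Phi => size Phi == size (head [::] Phis)) Phis]
  then Some (par_raw Phis) else None.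

(* \mathfrak S_{m,n} = A_{(I_m ... I_m), 0}  (n blocks) *)
Definition Snet (m n : nat) : option ann :=
  affA (\matrix_(i < m, j < m * n) ((i : nat) == (j %% m)%N)%:R) 0.

(* \mathfrak T_{m,n} = A_{(I_m ... I_m)^T, 0}  (n blocks) *)
Definition Tnet (m n : nat) : option ann :=
  affA (\matrix_(i < m * n, j < m) ((j : nat) == (i %% m)%N)%:R) 0.

Definition osequence (os : seq (option ann)) : option (seq ann) :=
  foldr (fun o acc =>
           if o is Some Phi then
             if acc is Some s then Some (Phi :: s) else None
           else None) (Some [::]) os.

(* \bigoplus_{k=u}^v \Phi_k (given as the list [Phi_u; ...; Phi_v]) *)
Definition oplus (os : seq (option ann)) : option ann :=
  if osequence os is Some Phis then
    if Phis is Phi :: _ then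
      if all (fun Phi' => [&& size Phi' == size Phi, inD Phi' == inD Phi &
                              outD Phi' == outD Phi]) Phis
      then ncomp (Snet (outD Phi) (size Phis))
                (ncomp (par Phis) (Tnet (inD Phi) (size Phis)))
      else None
    else None
  else None.

Definition affv (l : layer) (x : nat -> R) : nat -> R :=
  fun i => \sum_(j < lin l) ent (lW l) i j * x j + ent (lB l) i 0.

Fixpoint realize_raw (a : R -> R) (Phi : ann) (x : nat -> R) : nat -> R :=
  match Phi with
  | [::] => x
  | l :: r =>
    if r is [::] then affv l x
    else realize_raw a r (fun i => a (affv l x i))
  end.

Definition realization (a : R -> R) (Phi : ann) :
  'cV[R]_(inD Phi) -> 'cV[R]_(outD Phi) :=
  fun x => \col_(i < outD Phi) realize_raw a Phi (fun j => ent x j 0) i.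

(* For a network with I = O = 1, \mathcal R_a(\Phi) viewed as a map
   R -> R (identifying R^1 with R). *)
Definition realize1 (a : R -> R) (Phi : ann) : R -> R :=
  fun x => realize_raw a Phi (fun _ => x) 0%N.

End ANN.

(* Main.v *)
Require Import Defs.
From HB Require Import structures.
From mathcomp Require Import all_boot all_order all_algebra.
From mathcomp Require Import all_classical all_reals all_analysis.
From mathcomp Require Import ring.
Import Order.TTheory GRing.Theory Num.Theory numFieldNormedType.Exports.
Local Open Scope ring_scope.

Set Implicit Arguments. Unset Strict Implicit.
Section S.
Variable R : realType.

Lemma ent_in m n (A : 'M[R]_(m,n)) (i : 'I_m) (j : 'I_n) : ent A i j = A i j.
Proof. by rewrite /ent !valK. Qed.

Lemma ent_outl m n (A : 'M[R]_(m,n)) i j : (m <= i)%N -> ent A i j = 0.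
Proof. by move=> h; rewrite /ent insubF // ltnNge h. Qed.

Lemma ent_outr m n (A : 'M[R]_(m,n)) i j : (n <= j)%N -> ent A i j = 0.
Proof. by move=> h; rewrite /ent; case: (insub i) => // ?; rewrite insubF // ltnNge h. Qed.

Lemma ent_in0 m (B : 'cV[R]_m) (i : 'I_m) : ent B i 0%N = B i ord0.
Proof. exact: (ent_in B i ord0). Qed.

Lemma ent0 m n i j : ent (0 : 'M[R]_(m,n)) i j = 0.
Proof. by rewrite /ent; case: insub => // ?; case: insub => // ?; rewrite mxE. Qed.

Lemma affv_out (l : layer R) x i : (lout l <= i)%N -> affv l x i = 0.
Proof.
move=> h; rewrite /affv ent_outl // addr0 big1 // => j _; by rewrite ent_outl ?mul0r.
Qed.

Lemma merge_affv (l1 l2 : layer R) x i :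
  affv (Defs.merge l1 l2) x i = affv l1 (affv l2 x) i.
Proof.
case: (ltnP i (lout l1)) => h; last by rewrite !affv_out.
have [I ->] : exists I : 'I_(lout l1), i = I by exists (Ordinal h).
rewrite /affv /= ent_in0 mxE.
under eq_bigr => j _ do rewrite ent_in mxE mulr_suml.
rewrite exchange_big /= ent_in0.
under [X in _ = X + _]eq_bigr => t _ do rewrite ent_in mulrDr mulr_sumr.
rewrite big_split /= addrA; congr (_ + _ + _).
by apply eq_bigr => t _; apply eq_bigr => j _; rewrite mulrA.
Qed.

Lemma merge_affvF (l1 l2 : layer R) x :
  affv (Defs.merge l1 l2) x = affv l1 (affv l2 x).
Proof. by apply: funext => i; exact: merge_affv. Qed.

Lemma par_affv (l1 l2 : layer R) x i :
  affv (par_layer l1 l2) x i =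
  if (i < lout l1)%N then affv l1 x i
  else affv l2 (fun j => x (lin l1 + j)%N) (i - lout l1).
Proof.
case: (ltnP i (lout l1 + lout l2)) => h; last first.
  rewrite affv_out //; case: ifP => h1; first by move: h1; rewrite ltnNge (leq_trans (leq_addr _ _) h).
  by rewrite affv_out // leq_subRL ?h // leqNgt h1.
have [I ->] : exists I : 'I_(lout l1 + lout l2), i = I by exists (Ordinal h).
rewrite /affv /= big_split_ord /= ent_in0.
rewrite -(fintype.splitK I); case: (fintype.split I) => k; rewrite /unsplit.
- case: ifP => [_|]; last by rewrite /= ltn_ord.
  rewrite col_mxEu ent_in0.
  under eq_bigr => j _ do rewrite (ent_in _ (lshift _ k) (lshift _ j)) block_mxEul.
  under [X in _ + X + _]eq_bigr => j _ do rewrite (ent_in _ (lshift _ k) (rshift _ j)) block_mxEur mxE mul0r.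
  rewrite big1_eq addr0; congr (_ + _); apply eq_bigr => j _; by rewrite (ent_in (lW l1) k j).
- case: ifP => [|_]; first by rewrite /= ltnNge leq_addr.
  rewrite col_mxEd.
  have -> : (nat_of_ord (rshift (lout l1) k) - lout l1 = k)%N by rewrite /= addKn.
  rewrite ent_in0.
  under eq_bigr => j _ do rewrite (ent_in _ (rshift _ k) (lshift _ j)) block_mxEdl mxE mul0r.
  under [X in _ + X + _]eq_bigr => j _ do rewrite (ent_in _ (rshift _ k) (rshift _ j)) block_mxEdr.
  rewrite big1_eq add0r; congr (_ + _); apply eq_bigr => j _; by rewrite (ent_in (lW l2) k j).
Qed.


Definition idl : layer R := Layer (1%:M : 'M[R]_1) (0 : 'cV[R]_1).
Definition Al (bi : R) : layer R :=
  Defs.merge idl (Layer (1%:M : 'M[R]_1) (bi%:M : 'cV[R]_1)).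
Definition Bl (ci : R) : layer R :=
  Defs.merge (Layer (ci%:M : 'M[R]_1) (0 : 'cV[R]_1)) idl.

Lemma net_eq bi ci : smul ci (ncomp (idnet R 1) (affA1 1 bi)) = Some [:: Al bi; Bl ci].
Proof. reflexivity. Qed.

Lemma affv11 (w : 'M[R]_1) (B : 'cV[R]_1) x k :
  affv (Layer w B) x k = if k == 0%N then w ord0 ord0 * x 0%N + B ord0 ord0 else 0.
Proof.
case: k => [|k]; last by rewrite affv_out.
by rewrite /affv /= big_ord1 (ent_in w ord0 ord0) (ent_in0 B ord0).
Qed.

Lemma affvA bi x k : affv (Al bi) x k = if k == 0%N then x 0%N + bi else 0.
Proof.
rewrite merge_affv affv11 affv11 /=; case: k => [|k] //=.
by rewrite !mxE /= !mul1r mulr1n addr0.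
Qed.

Lemma affvB ci x k : affv (Bl ci) x k = if k == 0%N then ci * x 0%N else 0.
Proof.
rewrite merge_affv affv11 affv11 /=; case: k => [|k] //=.
by rewrite !mxE /= !mul1r mulr1n !addr0.
Qed.

Lemma par_raw_cons2 (Phi Psi : ann R) rest :
  par_raw (Phi :: Psi :: rest) = map (fun p => par_layer p.1 p.2) (zip Phi (par_raw (Psi :: rest))).
Proof. by []. Qed.

Lemma par_net (A B : nat -> layer R) (fA fB : nat -> R -> R)
  (hA1 : forall i, lin (A i) = 1%N) (hA2 : forall i, lout (A i) = 1%N)
  (hB1 : forall i, lin (B i) = 1%N) (hB2 : forall i, lout (B i) = 1%N)
  (hfA : forall i x k, affv (A i) x k = if k == 0%N then fA i (x 0%N) else 0)
  (hfB : forall i x k, affv (B i) x k = if k == 0%N then fB i (x 0%N) else 0) :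
  forall s : seq nat, s != [::] -> exists P1 P2,
    par_raw [seq [:: A i; B i] | i <- s] = [:: P1; P2] /\
    lin P1 = size s /\ lout P1 = size s /\ lin P2 = size s /\ lout P2 = size s /\
    (forall x k, affv P1 x k = if (k < size s)%N then fA (nth 0%N s k) (x k) else 0) /\
    (forall x k, affv P2 x k = if (k < size s)%N then fB (nth 0%N s k) (x k) else 0).
Proof.
elim => [//|i s IH] _; case: s IH => [|j s] IH.
  exists (A i), (B i); split => //; rewrite hA1 hA2 hB1 hB2; do 4!split => //.
  by split => x [|k]; rewrite ?hfA ?hfB.
have [P1 [P2 [e [h1 [h2 [h3 [h4 [f1 f2]]]]]]]] := IH isT.
rewrite map_cons par_raw_cons2 e /=.
exists (par_layer (A i) P1), (par_layer (B i) P2); split => //=.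
rewrite hA1 hA2 hB1 hB2 h1 h2 h3 h4; do 4!split => //.
split => x [|k]; rewrite par_affv ?hfA ?hfB ?hA2 ?hB2 //= ?f1 ?f2 ?hA1 ?hB1 subn1 //=.
Qed.

Lemma osequence_some (l : seq (ann R)) : osequence (map Some l) = Some l.
Proof. by elim: l => //= Phi l ->. Qed.

Lemma realize2 a (l1 l2 : layer R) x :
  realize_raw a [:: l1; l2] x = affv l2 (fun i => a (affv l1 x i)).
Proof. by []. Qed.

Lemma ncompE (P Q : ann R) : is_ann P -> is_ann Q -> inD P = outD Q ->
  ncomp (Some P) (Some Q) = Some (comp_raw P Q).
Proof. by move=> hp hq e; rewrite /ncomp hp hq e eqxx. Qed.

Lemma oplusE (Phi : ann R) rest :
  all (fun Phi' => [&& size Phi' == size Phi, inD Phi' == inD Phi &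
                              outD Phi' == outD Phi]) (Phi :: rest) ->
  oplus (map Some (Phi :: rest)) =
  ncomp (Snet R (outD Phi) (size (Phi :: rest)))
                (ncomp (par (Phi :: rest)) (Tnet R (inD Phi) (size (Phi :: rest)))).
Proof. by move=> h; rewrite /oplus osequence_some h. Qed.

Lemma parE (Phi : ann R) rest : all (@is_ann R) (Phi :: rest) ->
  all (fun Phi' => size Phi' == size Phi) (Phi :: rest) ->
  par (Phi :: rest) = Some (par_raw (Phi :: rest)).
Proof. by move=> h1 h2; rewrite /par h1 h2. Qed.

Lemma affvT n y k :
  affv (Layer (\matrix_(i < 1 * n, j < 1) ((j : nat) == (i %% 1)%N)%:R) (0 : 'cV[R]_(1 * n))) y k
  = if (k < n)%N then y 0%N else 0.
Proof.
case: ltnP => h; last by rewrite affv_out //= mul1n.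
have h' : (k < 1 * n)%N by rewrite mul1n.
have [K ->] : exists K : 'I_(1 * n), k = K by exists (Ordinal h').
rewrite /affv /= big_ord1 (ent_in _ K ord0) ent0 mxE modn1 /= mul1r addr0 //.
Qed.

Lemma affvS n z :
  affv (Layer (\matrix_(i < 1, j < 1 * n) ((i : nat) == (j %% 1)%N)%:R) (0 : 'cV[R]_1)) z 0%N
  = \sum_(j < n) z j.
Proof.
rewrite /affv /= ent0 addr0.
under eq_bigr => j _ do rewrite (ent_in _ ord0 j) mxE modn1 /= mul1r.
by rewrite -(big_mkord xpredT z) mul1n big_mkord.
Qed.

Lemma net_main (c b : nat -> R) n (hn : (0 < n)%N) : exists Psi : ann R,
  ncomp (affA1 1 (c 0%N))
    (oplus [seq smul (c i) (ncomp (idnet R 1) (affA1 1 (b i))) | i <- iota 1 n]) = Some Psi /\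
  is_ann Psi /\ dims Psi = [:: 1%N; n; 1%N] /\
  forall a x, realize1 a Psi x = c 0%N + \sum_(j < n) c j.+1 * a (x + b j.+1).
Proof.
have -> : [seq smul (c i) (ncomp (idnet R 1) (affA1 1 (b i))) | i <- iota 1 n] =
  map Some [seq [:: Al (b i); Bl (c i)] | i <- iota 1 n].
  by rewrite -map_comp; apply eq_map => i; exact: net_eq.
case: n hn => // n _.
have [|P1 [P2 [e [h1 [h2 [h3 [h4 [f1 f2]]]]]]]] :=
  @par_net (fun i => Al (b i)) (fun i => Bl (c i)) (fun i t => t + b i) (fun i t => c i * t)
    (fun _ => erefl) (fun _ => erefl) (fun _ => erefl) (fun _ => erefl)
    (fun i x k => affvA (b i) x k) (fun i x k => affvB (c i) x k) (iota 1 n.+1) => //.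
rewrite size_iota in h1 h2 h3 h4 f1 f2.
move: e; have -> : iota 1 n.+1 = 1%N :: iota 2 n by [].
rewrite map_cons => e.
rewrite oplusE; last first.
  by rewrite /= all_map; apply/allP => i _.
rewrite parE; last 2 first.
- by rewrite -map_cons -[1%N :: iota 2 n]/(iota 1 n.+1) all_map; apply/allP => i _.
- by rewrite -map_cons -[1%N :: iota 2 n]/(iota 1 n.+1) all_map; apply/allP => i _.
rewrite e -map_cons size_map.
have -> : (1%N :: iota 2 n) = iota 1 n.+1 by [].
rewrite size_iota (_ : outD [:: Al (b 1%N); Bl (c 1%N)] = 1%N) // (_ : inD [:: Al (b 1%N); Bl (c 1%N)] = 1%N) // /Tnet /Snet /affA1 /affA.
rewrite ncompE; last 3 first.
- by rewrite /is_ann /= h2 h3 eqxx.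
- by [].
- by rewrite /= h1 mul1n.
rewrite [comp_raw _ _]/=.
rewrite ncompE; last 3 first.
- by [].
- by rewrite /is_ann /= h2 h3 eqxx.
- by rewrite /outD /= h4 mul1n.
rewrite [comp_raw _ _]/=.
rewrite ncompE; last 3 first.
- by [].
- by rewrite /is_ann /= h2 h3 eqxx.
- by [].
rewrite [comp_raw _ _]/=.
eexists; split; first reflexivity.
split; first by rewrite /is_ann /= h2 h3 eqxx.
split; first by rewrite /= h2.
move=> a x; rewrite /realize1 realize2 merge_affvF merge_affvF affv11 /= affvS.
rewrite !mxE /= mulr1n mul1r addrC; congr (_ + _).
apply eq_bigr => j _; rewrite f2 ltn_ord merge_affv f1 affvT !ltn_ord.
by rewrite nth_iota // add1n.
Qed.

End S.

Unset Implicit Arguments.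

Theorem mainTheorem9 (R : realType) (gamma : nat)
  (hg0 : (0 < gamma)%N) (hg1 : gamma != 1%N)
  (b : nat -> R)
  (hb : forall i j : nat, (1 <= i)%N -> (i < j)%N -> (j <= gamma)%N -> b i < b j)
  (a : R -> R) (ha_cont : continuous a) (ha : forall x : R, a x = x ^+ gamma) :
  let cond (c : nat -> R) : Prop :=
    forall k : nat, (k <= gamma)%N ->
      (k == gamma)%:R * c 0%N + \sum_(1 <= i < gamma.+1) c i * b i ^+ k
      = (k == gamma - 1)%N%:R / gamma%:R in
  exists c : nat -> R,
    cond c /\
    (forall c' : nat -> R, cond c' -> forall i : nat, (i <= gamma)%N -> c' i = c i) /\
    exists Psi : ann R,
      ncomp (affA1 1 (c 0%N))
           (oplus [seq smul (c i) (ncomp (idnet R 1) (affA1 1 (b i)))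
                  | i <- iota 1 gamma]) = Some Psi /\
      is_ann Psi /\
      dims Psi = [:: 1%N; gamma; 1%N] /\
      continuous (realize1 a Psi) /\
      (forall x : R, realize1 a Psi x = x).
Proof.
move=> cond.
have [m em] : exists m, gamma = m.+2.
  by case: (gamma) hg0 hg1 => [|[|m]] // _ _; exists m.
subst gamma.
have sumE : forall (c : nat -> R) k,
    \sum_(1 <= i < m.+3) c i * b i ^+ k = \sum_(j < m.+2) c j.+1 * b j.+1 ^+ k.
  by move=> c k; rewrite big_add1 big_mkord.
set V := Vandermonde m.+2 (\row_(j < m.+2) b j.+1).
have Vu : V \in unitmx.
  rewrite unitmxE det_Vandermonde unitfE; apply: lt0r_neq0.
  apply: prodr_gt0 => i _; apply: prodr_gt0 => j hij.
  by rewrite !mxE subr_gt0; apply: hb.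
set r : 'cV[R]_(m.+2) := \col_(k < m.+2) (((k : nat) == (m.+2 - 1)%N)%:R / (m.+2)%:R).
set cv := invmx V *m r.
have Vcv : V *m cv = r by rewrite mulKVmx.
have condE : forall c : nat -> R, cond c <->
   (V *m (\col_(j < m.+2) c j.+1) = r /\ c 0%N = - \sum_(j < m.+2) c j.+1 * b j.+1 ^+ m.+2).
  move=> c; split.
  - move=> h; split.
      apply/matrixP => k j0; rewrite ord1 !mxE.
      have := h k (ltnW (ltn_ord k)); rewrite sumE.
      have -> : (k == m.+2 :> nat) = false by rewrite ltn_eqF.
      rewrite mul0r add0r => <-; apply eq_bigr => j _; by rewrite !mxE mulrC.
    have := h m.+2 (leqnn _); rewrite eqxx mul1r sumE.
    have -> : (m.+2 == m.+2 - 1)%N = false by rewrite subn1 /= gtn_eqF.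
    by rewrite mul0r => /eqP; rewrite addr_eq0 => /eqP.
  - move=> [hV h0] k hk; rewrite sumE.
    case: (ltnP k m.+2) => hk'.
      have -> : (k == m.+2 :> nat) = false by rewrite ltn_eqF.
      rewrite mul0r add0r.
      have := congr1 (fun M : 'cV[R]_(m.+2) => M (Ordinal hk') ord0) hV.
      rewrite !mxE => <-; apply eq_bigr => j _; by rewrite !mxE mulrC.
    have -> : k = m.+2 by apply/eqP; rewrite eqn_leq hk hk'.
    rewrite eqxx mul1r h0 addNr.
    have -> : (m.+2 == m.+2 - 1)%N = false by rewrite subn1 /= gtn_eqF.
    by rewrite mul0r.
pose cn j := ent cv j 0%N.
pose c i := if i is i'.+1 then cn i' else - \sum_(j < m.+2) cn j * b j.+1 ^+ m.+2.
have colc : \col_(j < m.+2) c j.+1 = cv.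
  by apply/matrixP => j j0; rewrite ord1 mxE /c /cn ent_in0.
have hc : cond c by apply/condE; rewrite colc.
exists c; split => //; split.
  move=> c' /condE [h1 h2].
  have colc' : \col_(j < m.+2) c' j.+1 = cv by rewrite /cv -h1 mulKmx.
  have ec : forall j : 'I_(m.+2), c' j.+1 = cn j.
    move=> j; have := congr1 (fun M : 'cV[R]_(m.+2) => M j ord0) colc'.
    by rewrite mxE /cn ent_in0.
  case => [|i] hi.
    by rewrite h2 /=; congr (- _); apply eq_bigr => j _; rewrite ec.
  exact: (ec (Ordinal hi)).
have [Psi [e [hA [hD hR]]]] := net_main c b (isT : (0 < m.+2)%N).
exists Psi; split => //; split => //; split => //.
have hS : forall k, (k < m.+2)%N ->
    \sum_(j < m.+2) c j.+1 * b j.+1 ^+ k = (k == m.+1)%:R / (m.+2)%:R.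
  move=> k hk; have := hc k (ltnW hk); rewrite sumE.
  have -> : (k == m.+2 :> nat) = false by rewrite ltn_eqF.
  by rewrite mul0r add0r subn1.
have hSg : \sum_(j < m.+2) c j.+1 * b j.+1 ^+ m.+2 = - c 0%N.
  have := hc m.+2 (leqnn _); rewrite sumE eqxx mul1r.
  have -> : (m.+2 == m.+2 - 1)%N = false by rewrite subn1 /= gtn_eqF.
  by rewrite mul0r addrC => /eqP; rewrite addr_eq0 => /eqP.
have hid : forall x, realize1 a Psi x = x.
  move=> x; rewrite hR.
  under eq_bigr => j _ do rewrite ha exprDn mulr_sumr.
  rewrite exchange_big.
  have step : forall i : 'I_(m.+3), \sum_(j < m.+2) c j.+1 * (x ^+ (m.+2 - i) * b j.+1 ^+ i *+ 'C(m.+2, i))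
      = (x ^+ (m.+2 - i) *+ 'C(m.+2, i)) * \sum_(j < m.+2) c j.+1 * b j.+1 ^+ i.
    by move=> i; rewrite mulr_sumr; apply eq_bigr => j _; ring.
  under eq_bigr => i _ do rewrite step.
  rewrite big_ord_recr hSg big_ord_recr hS // eqxx big1; last first.
    move=> i _; rewrite hS; last by apply: (ltn_trans (ltn_ord i)).
    by rewrite /= (ltn_eqF (ltn_ord i)) mul0r mulr0.
  have hm : (m.+2)%:R != 0 :> R by rewrite pnatr_eq0.
  rewrite /= subnn subSnn binn binSn !expr0 !expr1 add0r.
  have hSA : forall S A : R, - S + (A + 1 * - - S) = A by move=> S A; ring.
  rewrite hSA -mulr_natr -mulrA mul1r.
  by rewrite divff // mulr1.
split; last exact: hid.
have -> : realize1 a Psi = id by apply: funext => x; rewrite hid.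
by move=> x; apply: cvg_id.
Qed.
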